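(* For every proper caterpillar $T$ and every $\beta\in\Phi(T)$, \[U^L_T(\mathbf{x})=\mathcal{L}(\beta,\mathbf{x}).\]
   Context: Let $\mathbf{x}=x_1,x_2,\ldots$ be commuting indeterminates; for a partition $\lambda=\lambda_1\cdots\lambda_l$ put $\mathbf{x}_\lambda=x_{\lambda_1}\cdots x_{\lambda_l}$. A composition is a finite nonempty sequence of positive integers; the type $\lambda(\alpha)$ of a composition $\alpha$ is the partition obtained by sorting its parts in weakly decreasing order. A composition $\alpha$ is a coarsening of $\beta$, written $\alpha\succeq\beta$, if $\alpha$ is obtained from $\beta$ by summing blocks of consecutive parts (i.e. there are indices $1=j_0<j_1<\cdots<j_{i+1}=\ell(\beta)+1$ with $\alpha_r=\beta_{j_{r-1}}+\cdots+\beta_{j_r-1}$). The $\mathcal{L}$-polynomial is $\mathcal{L}(\beta,\mathbf{x})=\sum_{\alpha\succeq\beta}\mathbf{x}_{\lambda(\alpha)}$. A caterpillar is a tree in which the internal (non-leaf) vertices induce a non-trivial path (the spine), with $L(T)$ the set of non-spine edges; it is proper if every internal vertex is adjacent to a leaf. For $A\subseteq E(T)$, $\lambda(A)$ is the partition formed by the sizes of the components of $(V(T),A)$, and $U^L_T(\mathbf{x})=\sum_{A\subseteq E(T),\,L(T)\subseteq A}\mathbf{x}_{\lambda(A)}$. For a proper caterpillar with spine $v_1\cdots v_k$, let $\beta_i$ be the number of vertices of the component of $(V(T),L(T))$ containing $v_i$, and $\Phi(T)=\{\beta_1\cdots\beta_k,\ \beta_k\cdots\beta_1\}$. *)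

(* Defs.v *)
From mathcomp Require Import all_boot all_order all_algebra.
Set Implicit Arguments. Unset Strict Implicit. Unset Printing Implicit Defensive.
Import GRing.Theory.
Local Open Scope ring_scope.

Section Graphs.
Variable V : finType.
Variable e : rel V.

Definition simple_graph := symmetric e /\ irreflexive e.

Definition edges : {set {set V}} := [set [set p.1; p.2] | p : V * V & e p.1 p.2].

Definition connected := forall x y : V, connect e x y.

Definition acyclic := forall c : seq V, uniq c -> (3 <= size c)%N -> ~~ cycle e c.

Definition is_tree := connected /\ acyclic.

Definition degree (v : V) : nat := #|[set u | e v u]|.
Definition is_leaf (v : V) : bool := degree v == 1%N.
Definition is_internal (v : V) : bool := ~~ is_leaf v.

(* s = v_1 ... v_k is a spine: the internal vertices induce the non-trivial
   path v_1 ... v_k (k >= 2) *)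
Definition is_spine (s : seq V) : Prop :=
  [/\ uniq s, (2 <= size s)%N,
      (forall v, (v \in s) = is_internal v),
      (forall (x0 : V) (i : nat), (i.+1 < size s)%N ->
          e (nth x0 s i) (nth x0 s i.+1)) &
      (forall x y, x \in s -> y \in s -> e x y ->
          (index y s == (index x s).+1) || (index x s == (index y s).+1))].

Definition caterpillar := exists s, is_spine s.

Definition proper_caterpillar :=
  caterpillar /\ forall v, is_internal v -> exists2 u, e v u & is_leaf u.

Definition leaf_edges : {set {set V}} :=
  [set f in edges | ~~ (f \subset [set v | is_internal v])].

Definition edge_rel (A : {set {set V}}) : rel V := fun x y => [set x; y] \in A.

Definition component (A : {set {set V}}) (v : V) : {set V} :=
  [set y | connect (edge_rel A) v y].

Definition components (A : {set {set V}}) : {set {set V}} :=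
  [set component A v | v : V].

Definition xA (R : comNzRingType) (x : nat -> R) (A : {set {set V}}) : R :=
  \prod_(C in components A) x #|C|.

Definition UL (R : comNzRingType) (x : nat -> R) : R :=
  \sum_(A : {set {set V}} | (A \subset edges) && (leaf_edges \subset A)) xA x A.

Definition spine_comp (s : seq V) : seq nat :=
  [seq #|component leaf_edges v| | v <- s].

Definition Phi (beta : seq nat) : Prop :=
  exists2 s, is_spine s & (beta = spine_comp s \/ beta = rev (spine_comp s)).

End Graphs.

(* coarsening: alpha is obtained from beta by summing blocks of consecutive
   parts.  0-indexed version of the cut indices 1 = j_0 < ... < j_{i+1} = l(beta)+1:
   J = [:: J_0; ...; J_{size alpha}] with 0 = J_0 < ... < J_{size alpha} = size beta
   and alpha_r = beta_{J_r} + ... + beta_{J_{r+1}-1}.  All such J have entries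
   <= size beta, so the existential ranges over a finite type. *)
Definition coarsening_by (alpha beta Js : seq nat) : bool :=
  [&& sorted ltn Js, size Js == (size alpha).+1, nth 0 Js 0 == 0%N,
      nth 0 Js (size alpha) == size beta &
      all (fun r => nth 0 alpha r ==
                    (\sum_(nth 0 Js r <= t < nth 0 Js r.+1) nth 0 beta t)%N)
          (iota 0 (size alpha))].

Definition coarsening (alpha beta : seq nat) : bool :=
  [exists J : {ffun 'I_(size alpha).+1 -> 'I_(size beta).+1},
     coarsening_by alpha beta [seq val (J i) | i <- enum 'I_(size alpha).+1]].

Definition ptype (alpha : seq nat) : seq nat := sort geq alpha.

Definition xpart (R : comNzRingType) (x : nat -> R) (lam : seq nat) : R :=
  \prod_(a <- lam) x a.

(* Every coarsening of beta is a sequence of length l <= n := sumn beta with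
   entries in [1, n]; it is enumerated exactly once as a finite function
   'I_l -> 'I_(n.+1). *)
Definition Lpoly (R : comNzRingType) (x : nat -> R) (beta : seq nat) : R :=
  let n := sumn beta in
  \sum_(l < n.+1)
    \sum_(t : {ffun 'I_l -> 'I_n.+1} | coarsening [seq val (t i) | i <- enum 'I_l] beta)
      xpart x (ptype [seq val (t i) | i <- enum 'I_l]).

(* Main.v *)
Require Import Defs.
From mathcomp Require Import all_boot all_order all_algebra.
From mathcomp Require Import zify.
Set Implicit Arguments. Unset Strict Implicit. Unset Printing Implicit Defensive.

Lemma sorted_mapS (J : seq nat) : sorted ltn (map S J) = sorted ltn J.
Proof. by rewrite sorted_map. Qed.

Lemma sorted0S (J : seq nat) : sorted ltn (0 :: map S J) = sorted ltn J.
Proof. by case: J => //= j J; rewrite path_map. Qed.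

Lemma big_shift1 (m n : nat) (F : nat -> nat) :
  (\sum_(m.+1 <= i < n.+1) F i = \sum_(m <= i < n) F i.+1)%N.
Proof. by rewrite -addn1 big_addn subn1 /=; apply: eq_bigr => i _; rewrite addn1. Qed.

Lemma all_iotaP (P : pred nat) n : reflect (forall r, r < n -> P r) (all P (iota 0 n)).
Proof.
apply: (iffP allP) => H r Hr; [apply: H; rewrite mem_iota | ].
by []. by apply: H; move: Hr; rewrite mem_iota.
Qed.

Lemma cb_S a0 alpha' beta J :
  coarsening_by (a0 :: alpha') beta (0 :: map S J) <->
  [/\ sorted ltn J, size J = (size alpha').+1, (nth 0 J (size alpha')).+1 = size beta,
    a0 = (\sum_(0 <= t < (nth 0 J 0).+1) nth 0 beta t)%N &
    forall r, r < size alpha' -> nth 0 alpha' r =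
      (\sum_((nth 0 J r).+1 <= t < (nth 0 J r.+1).+1) nth 0 beta t)%N].
Proof.
rewrite /coarsening_by [size (_ :: _)]/= size_map eqSS.
split.
  case/and5P=> Hs /eqP Hsz _ Hn /all_iotaP Ha.
  rewrite /= in Hsz Hn Ha.
  have HsJ : sorted ltn J by rewrite -sorted0S.
  split => //.
  - by move: Hn; rewrite (nth_map 0) ?Hsz // => /eqP.
  - by have := Ha 0 isT; rewrite /= (nth_map 0) ?Hsz // => /eqP.
  - move=> r Hr; have := Ha r.+1; rewrite ltnS Hr /= => /(_ isT) /eqP ->.
    by rewrite !(nth_map 0) ?Hsz // ltnW.
case=> Hs Hsz Hn Ha0 Ha.
apply/and5P; split => //.
- by rewrite sorted0S.
- by rewrite Hsz.
- by rewrite /= (nth_map 0) ?Hsz // Hn.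
- apply/all_iotaP; case=> [|r] Hr /=.
    by rewrite (nth_map 0) ?Hsz // Ha0.
  by rewrite !(nth_map 0) ?Hsz ?Ha // ltnW.
Qed.

Lemma mapSpred (s : seq nat) : path ltn 0 s -> s = map S (map predn s).
Proof.
move=> Hp; have := order_path_min ltn_trans Hp.
elim: s {Hp} => //= y s IH /andP[Hy Ha]; by rewrite prednK // -IH.
Qed.

Lemma cb_shape alpha beta Js : coarsening_by alpha beta Js -> 0 < size beta ->
  exists a0 alpha' J, alpha = a0 :: alpha' /\ Js = 0 :: map S J.
Proof.
case/and5P=> Hs /eqP Hsz /eqP H0 /eqP Hn _ Hb.
case: alpha Hsz Hn => [|a0 alpha'] Hsz Hn.
  by move: Hb; rewrite -Hn H0.
case: Js Hs Hsz H0 Hn => // j0 rest Hs Hsz /= H0 Hn; subst j0.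
exists a0, alpha', (map predn rest); split => //.
by rewrite -mapSpred.
Qed.

Lemma cb_def alpha beta Js : coarsening_by alpha beta Js <->
  [/\ sorted ltn Js, size Js = (size alpha).+1, nth 0 Js 0 = 0,
      nth 0 Js (size alpha) = size beta &
      forall r, r < size alpha -> nth 0 alpha r =
        (\sum_(nth 0 Js r <= t < nth 0 Js r.+1) nth 0 beta t)%N].
Proof.
split.
  by case/and5P=> Hs /eqP Hsz /eqP H0 /eqP Hn /all_iotaP Ha; split => // r /Ha /eqP.
case=> Hs Hsz H0 Hn Ha; apply/and5P; split => //; try by apply/eqP.
by apply/all_iotaP => r /Ha ->.
Qed.

Lemma EqvC a0 alpha' b bs J : nth 0 J 0 = 0 ->
  coarsening_by (a0 :: alpha') (b :: bs) (0 :: map S J) <->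
  a0 = b /\ coarsening_by alpha' bs J.
Proof.
move=> HJ0; split.
  case/cb_S; rewrite HJ0 big_nat1 /= => Hs Hsz Hn Ha0 Ha; split => //.
  apply/cb_def; split => //; first by case: Hn.
  by move=> r /Ha ->; rewrite big_shift1.
case=> -> /cb_def [Hs Hsz _ Hn Ha]; apply/cb_S; split => //.
- by rewrite Hn.
- by rewrite HJ0 big_nat1.
- by move=> r /Ha ->; rewrite big_shift1.
Qed.

Lemma sumM b b2 bs n :
  (\sum_(0 <= t < n.+2) nth 0 (b :: b2 :: bs) t =
   \sum_(0 <= t < n.+1) nth 0 (b + b2 :: bs) t)%N.
Proof. by rewrite !big_nat_recl //= addnA. Qed.

Lemma sumM2 b b2 bs m n :
  (\sum_(m.+2 <= t < n.+2) nth 0 (b :: b2 :: bs) t =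
   \sum_(m.+1 <= t < n.+1) nth 0 (b + b2 :: bs) t)%N.
Proof. by rewrite !big_shift1. Qed.

Lemma EqvM a0 alpha' b b2 bs J :
  coarsening_by (a0 :: alpha') (b :: b2 :: bs) (0 :: map S (map S J)) <->
  coarsening_by (a0 :: alpha') (b + b2 :: bs) (0 :: map S J).
Proof.
split.
  case/cb_S; rewrite sorted_mapS size_map => Hs Hsz Hn Ha0 Ha.
  rewrite !(nth_map 0) ?Hsz // in Hn Ha0.
  apply/cb_S; split => //.
  - by move: Hn => /= [->].
  - by rewrite Ha0 sumM.
  - move=> r Hr; rewrite Ha // !(nth_map 0) ?Hsz ?sumM2 //.
    exact: ltnW.
case/cb_S => Hs Hsz Hn Ha0 Ha.
apply/cb_S; rewrite sorted_mapS size_map; split => //.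
- by rewrite (nth_map 0) ?Hsz // Hn.
- by rewrite (nth_map 0) ?Hsz // Ha0 sumM.
- move=> r Hr; rewrite Ha // !(nth_map 0) ?Hsz ?sumM2 //.
  exact: ltnW.
Qed.

Fixpoint coarsA (a : nat) (bs : seq nat) (c : seq bool) : seq nat :=
  match bs, c with
  | [::], _ => [:: a]
  | b :: bs', cut :: c' => if cut then a :: coarsA b bs' c' else coarsA (a + b) bs' c'
  | _ :: _, [::] => [:: a]
  end.

Fixpoint allbits (m : nat) : seq (seq bool) :=
  if m is m'.+1 then map (cons true) (allbits m') ++ map (cons false) (allbits m')
  else [:: [::]].

Definition Cs a bs := map (coarsA a bs) (allbits (size bs)).

Lemma Cs_nil a : Cs a [::] = [:: [:: a]].
Proof. by []. Qed.

Lemma Cs_cons a b bs : Cs a (b :: bs) = map (cons a) (Cs b bs) ++ Cs (a + b) bs.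
Proof. by rewrite /Cs /= map_cat -!map_comp. Qed.

Definition coarse' alpha beta := exists Js, coarsening_by alpha beta Js.

Lemma memCs bs a alpha : alpha \in Cs a bs <-> coarse' alpha (a :: bs).
Proof.
elim: bs a alpha => [|b bs IH] a alpha.
  rewrite Cs_nil inE; split.
    move/eqP ->; exists (0 :: map S [:: 0]); apply/EqvC => //.
  case=> Js /[dup] Hc /cb_shape [//|a0 [alpha' [J [Ha HJs]]]]; subst.
  case/cb_S: Hc => Hs Hsz Hn Ha0 _.
  case: alpha' Hsz Hn => [|a1 alpha'] Hsz Hn.
    by case: Hn => Hn; rewrite Ha0 Hn big_nat1.
  have : nth 0 J 0 < nth 0 J (size (a1 :: alpha')).
    by apply: (sorted_ltn_nth ltn_trans) => //; rewrite inE Hsz.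
  by case: Hn => ->.
rewrite Cs_cons mem_cat; split.
  case/orP.
    case/mapP => alpha' /IH [Js Hc] ->.
    exists (0 :: map S Js); apply/EqvC; last by split.
    by case/cb_def: Hc.
  case/IH => Js Hc.
  have [a0 [al [J [Hal HJs]]]] := cb_shape Hc isT; subst.
  by exists (0 :: map S (map S J)); apply/EqvM.
case=> Js Hc.
have [a0 [al [J [Hal HJs]]]] := cb_shape Hc isT; subst.
have [Hs _ _ _ _] := iffLR (cb_S _ _ _ _) Hc.
case HJ0 : (nth 0 J 0) => [|j0].
  case/EqvC: Hc => // -> Hc; apply/orP; left.
  by apply/mapP; exists al => //; apply/IH; exists J.
have HJ : J = map S (map predn J).
  apply: mapSpred; case: (J) Hs HJ0 => //= j J' -> ->; by [].
rewrite HJ in Hc; move/EqvM: Hc => Hc; apply/orP; right.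
by apply/IH; exists (0 :: map S (map predn J)).
Qed.

Lemma coarsA_head a bs c : a <= nth 0 (coarsA a bs c) 0.
Proof.
elim: bs a c => [|b bs IH] a [|[] c] //=.
exact: leq_trans (leq_addr _ _) (IH _ _).
Qed.

Lemma coarsA_pos a bs c : 0 < a -> all (fun b => 0 < b) bs ->
  all (fun b => 0 < b) (coarsA a bs c).
Proof.
elim: bs a c => [|b bs IH] a c Ha; first by case: c => [|? ?] /=; rewrite Ha.
case/andP => Hb Hbs; case: c => [|[] c] /=; first by rewrite Ha.
  by rewrite Ha IH.
by rewrite IH // addn_gt0 Ha.
Qed.

Lemma coarsA_sum a bs c : sumn (coarsA a bs c) <= a + sumn bs.
Proof.
elim: bs a c => [|b bs IH] a [|[] c] //=.
- by rewrite addn0 leq_addr.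
- by rewrite leq_add2l IH.
- by rewrite addnA IH.
Qed.

Lemma uniq_Cs bs a : 0 < a -> all (fun b => 0 < b) bs -> uniq (Cs a bs).
Proof.
elim: bs a => [|b bs IH] a Ha //= /andP[Hb Hbs].
rewrite Cs_cons cat_uniq map_inj_uniq; last by move=> ? ? [].
rewrite IH // IH ?addn_gt0 ?Ha //=.
rewrite andbT; apply/hasPn => y /mapP [c _ ->]; apply/negP => /mapP [z _ Hz].
have := coarsA_head (a + b) bs c; rewrite Hz /=.
by rewrite -{2}(addn0 a) leq_add2l leqNgt Hb.
Qed.

Lemma coarseningP alpha beta : coarsening alpha beta <-> coarse' alpha beta.
Proof.
split; first by case/existsP => J H; eexists; exact: H.
case=> Js Hc; have := Hc; case/cb_def => Hs Hsz H0 Hn _.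
have Hle : forall i, i < size Js -> nth 0 Js i <= size beta.
  move=> i Hi; rewrite -Hn; apply: (sorted_leq_nth leq_trans leqnn).
  - by apply: (sub_sorted _ Hs) => m n; apply: ltnW.
  - by [].
  - by rewrite inE Hsz.
  - by rewrite -ltnS -Hsz.
apply/existsP; exists [ffun i : 'I_(size alpha).+1 => (inord (nth 0 Js i) : 'I_(size beta).+1)].
suff -> : [seq val ([ffun i : 'I_(size alpha).+1 => (inord (nth 0 Js i) : 'I_(size beta).+1)] i) | i <- enum 'I_(size alpha).+1] = Js by [].
apply: (@eq_from_nth _ 0); first by rewrite size_map size_enum_ord.
move=> i; rewrite size_map size_enum_ord => Hi.
rewrite (nth_map ord0) ?size_enum_ord // ffunE nth_enum_ord //=.
by rewrite inordK // ltnS Hle // Hsz.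
Qed.

Lemma Lpoly_list (R : comNzRingType) (x : nat -> R) beta C :
  uniq C -> (forall alpha, alpha \in C <-> coarsening alpha beta) ->
  (forall alpha, alpha \in C -> size alpha <= sumn beta /\ all (fun a => a <= sumn beta) alpha) ->
  Lpoly x beta = (\sum_(alpha <- C) xpart x (ptype alpha))%R.
Proof.
move=> HU HC Hb; rewrite /Lpoly; set n := sumn beta.
set F := fun alpha => xpart x (ptype alpha).
transitivity (\sum_(l < n.+1) \sum_(alpha <- C | size alpha == l) F alpha)%R.
  apply: eq_bigr => l _.
  set sq := fun t : {ffun 'I_l -> 'I_n.+1} => [seq val (t i) | i <- enum 'I_l].
  rewrite -(big_map sq (fun a => coarsening a beta) F) -big_filter -[RHS]big_filter.
  apply: perm_big; apply: uniq_perm.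
  - apply: filter_uniq; rewrite map_inj_uniq ?index_enum_uniq //.
    move=> t1 t2 Heq; apply/ffunP => i; apply: val_inj.
    have := congr1 (fun s => nth 0 s i) Heq.
    by rewrite /sq !(nth_map i) -?enumT ?size_enum_ord ?nth_ord_enum.
  - exact: filter_uniq.
  move=> alpha; rewrite !mem_filter; apply/andP/andP.
    case=> HP /mapP [t _ Ht]; split; last by apply/HC.
    by rewrite Ht size_map size_enum_ord.
  case=> /eqP Hsz HaC; split; first by apply/HC.
  have [_ /allP Hall] := Hb _ HaC.
  apply/mapP; exists [ffun i : 'I_l => (inord (nth 0 alpha i) : 'I_n.+1)]; first by rewrite mem_index_enum.
  apply: (@eq_from_nth _ 0); first by rewrite size_map size_enum_ord.
  move=> i; rewrite Hsz => Hi.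
  rewrite /sq (nth_map (Ordinal Hi)) ?size_enum_ord // ffunE /= nth_enum_ord //.
  by rewrite inordK // ltnS Hall // mem_nth // Hsz.
rewrite (eq_bigr (fun l : 'I_n.+1 => \sum_(alpha <- C) (if size alpha == l then F alpha else 0))%R);
  last by move=> l _; rewrite big_mkcond.
rewrite exchange_big /=; apply: eq_big_seq => a Ha.
have [Hs _] := Hb _ Ha.
rewrite -big_mkcond /= (big_pred1 (Ordinal (Hs : size a < n.+1))) //.
Qed.

Lemma size_le_sumn (s : seq nat) : all (fun b => 0 < b) s -> size s <= sumn s.
Proof. by elim: s => //= a s IH /andP[Ha /IH]; rewrite -add1n; apply: leq_add. Qed.

Lemma mem_le_sumn (s : seq nat) a : a \in s -> a <= sumn s.
Proof.
elim: s => //= b s IH; rewrite inE => /orP[/eqP -> | /IH]; first exact: leq_addr.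
by move=> H; apply: leq_trans H (leq_addl _ _).
Qed.

Lemma xpartE (R : comNzRingType) (x : nat -> R) s : xpart x (ptype s) = (\prod_(a <- s) x a)%R.
Proof. by rewrite /xpart /ptype; apply: perm_big; rewrite perm_sort. Qed.

Lemma Lpoly_Cs (R : comNzRingType) (x : nat -> R) a bs :
  0 < a -> all (fun b => 0 < b) bs ->
  Lpoly x (a :: bs) = (\sum_(c <- allbits (size bs)) \prod_(y <- coarsA a bs c) x y)%R.
Proof.
move=> Ha Hbs.
rewrite (@Lpoly_list _ _ _ (Cs a bs)).
- by rewrite big_map; apply: eq_bigr => c _; rewrite xpartE.
- exact: uniq_Cs.
- by move=> alpha; split => [/memCs/coarseningP | /coarseningP/memCs].
move=> alpha /mapP [c _ ->].
have Hp := coarsA_pos c Ha Hbs.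
have Hs : sumn (coarsA a bs c) <= sumn (a :: bs) by exact: coarsA_sum.
split; first exact: leq_trans (size_le_sumn Hp) Hs.
by apply/allP => y Hy; apply: leq_trans (mem_le_sumn Hy) Hs.
Qed.

Definition blk (c : seq bool) i := count id (take i c).

Definition blocksum (c : seq bool) (f : nat -> nat) k j :=
  (\sum_(i < k) (if blk c i == j then f i else 0))%N.

Lemma sum_split0 n (F : nat -> nat) : (\sum_(i < n.+1) F i = F 0 + \sum_(i < n) F i.+1)%N.
Proof. by rewrite big_ord_recl. Qed.

Lemma coarsA_blocks bs a c : size c = size bs ->
  coarsA a bs c = [seq blocksum c (nth 0 (a :: bs)) (size bs).+1 j | j <- iota 0 (count id c).+1].
Proof.
rewrite /blocksum.
elim: bs a c => [|b bs IH] a c.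
  by case: c => // _; rewrite /= big_ord_recl big_ord0 /blk /= addn0.
case: c => // cut c' [Hsz].
have blkS : forall cut i, blk (cut :: c') i.+1 = (cut + blk c' i)%N by [].
have blk0 : forall c, blk c 0 = 0 by case.
case: cut.
  have -> : coarsA a (b :: bs) (true :: c') = a :: coarsA b bs c' by [].
  have -> : count id (true :: c') = (count id c').+1 by [].
  have -> : iota 0 (count id c').+2 = 0 :: iota 1 (count id c').+1 by [].
  rewrite map_cons (IH b c' Hsz); congr (_ :: _).
    rewrite big_ord_recl blk0 /= big1 ?addn0 // => i _.
  rewrite (iotaDl 1 0) -map_comp; apply: eq_map => j /=.
  rewrite [RHS]big_ord_recl blk0 /= add0n; apply: eq_bigr => i _.
  by rewrite /bump /= add1n blkS add1n eqSS add0n.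
have -> : coarsA a (b :: bs) (false :: c') = coarsA (a + b) bs c' by [].
have -> : count id (false :: c') = count id c' by [].
rewrite (IH (a + b) c' Hsz); apply: eq_map => j.
rewrite [size _]/= (sum_split0 _ (fun i => if blk c' i == j then nth 0 (a + b :: bs) i else 0)).
rewrite (sum_split0 _ (fun i => if blk (false :: c') i == j then nth 0 [:: a, b & bs] i else 0)).
rewrite (sum_split0 _ (fun i => if blk (false :: c') i.+1 == j then nth 0 [:: a, b & bs] i.+1 else 0)).
rewrite !blkS !blk0 /=.
rewrite addnA; congr (_ + _); first by case: (0 == j); rewrite ?addn0.
Qed.

Lemma set2C' (T : finType) (a b : T) : [set a; b] = [set b; a].
Proof. by rewrite setUC. Qed.


Lemma blkS c m : blk c m.+1 = blk c m + nth false c m.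
Proof.
rewrite /blk; case: (ltnP m (size c)) => H.
  by rewrite (take_nth false H) -cats1 count_cat /= addn0.
by rewrite !take_oversize ?nth_default ?addn0 // (leq_trans H).
Qed.

Lemma blk0 c : blk c 0 = 0.
Proof. by case: c. Qed.

Lemma blk_mono c i j : i <= j -> blk c i <= blk c j.
Proof.
move/subnK => <-; elim: (j - i) => [|d IH]; first by [].
by rewrite addSn blkS; apply: leq_trans IH (leq_addr _ _).
Qed.

Lemma blk_le1 c m : blk c m.+1 <= (blk c m).+1.
Proof. by rewrite blkS -addn1 leq_add2l leq_b1. Qed.

Lemma blk_surj c m j : j <= blk c m -> exists2 i, i <= m & blk c i = j.
Proof.
elim: m j => [|m IH] j.
  by rewrite blk0 leqn0 => /eqP ->; exists 0 => //; rewrite blk0.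
move=> Hj; case: (leqP j (blk c m)) => H.
  by have [i Hi Hb] := IH _ H; exists i => //; exact: leq_trans Hi (leqnSn _).
exists m.+1 => //; apply/eqP; rewrite eqn_leq Hj andbT.
exact: leq_trans (blk_le1 c m) H.
Qed.

Lemma blk_size c : blk c (size c) = count id c.
Proof. by rewrite /blk take_size. Qed.

Lemma blk_nseq m i : i <= m -> blk (nseq m true) i = i.
Proof.
elim: i => [|i IH] H; first by rewrite blk0.
by rewrite blkS IH ?(ltnW H) // nth_nseq H addn1.
Qed.

Lemma mem_allbits m c : (c \in allbits m) = (size c == m).
Proof.
elim: m c => [|m IH] [|b c] //=.
- by rewrite mem_cat; apply/negP => /orP[] /mapP [].
rewrite mem_cat eqSS -IH; apply/orP/idP.
  by case=> /mapP [c' Hc' [_ ->]].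
by case: b => Hc; [left | right]; apply/mapP; exists c.
Qed.

Lemma uniq_allbits m : uniq (allbits m).
Proof.
elim: m => //= m IH; rewrite cat_uniq !map_inj_uniq ?IH //; try by move=> ? ? [].
rewrite andbT; apply/hasPn => c /mapP [c' _ ->]; by apply/negP => /mapP [? _ []].
Qed.

Lemma sum_tuples (R : comNzRingType) m (F : seq bool -> R) :
  (\sum_(t : m.-tuple bool) F (val t) = \sum_(c <- allbits m) F c)%R.
Proof.
rewrite -(big_map val xpredT F); apply: perm_big; apply: uniq_perm.
- by rewrite map_inj_uniq ?index_enum_uniq //; exact: val_inj.
- exact: uniq_allbits.
move=> c; rewrite mem_allbits; apply/mapP/idP.
  by case=> t _ ->; rewrite size_tuple.
by move=> Hc; exists (Tuple Hc); rewrite ?mem_index_enum.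
Qed.

Lemma index_rev (T : eqType) (s : seq T) y : uniq s -> y \in s ->
  index y (rev s) = size s - (index y s).+1.
Proof.
move=> U Hy; have Hi : index y s < size s by rewrite index_mem.
have Hj : size s - (index y s).+1 < size s by rewrite ltn_subrL; case: (s) Hi.
rewrite -{1}(nth_index y Hy) -{1}(_ : nth y (rev s) (size s - (index y s).+1) = nth y s (index y s)).
  by rewrite index_uniq ?size_rev ?rev_uniq.
by rewrite nth_rev // subnSK // subKn // ltnW.
Qed.

Section Graph.
Variable V : finType.
Variable e : rel V.
Hypothesis e_sym : symmetric e.
Hypothesis econn : connected e.
Variable s : seq V.
Hypothesis Hsp : is_spine e s.
Variable x0 : V.

Let k := size s.

Lemma s_uniq : uniq s. Proof. by case: Hsp. Qed.
Lemma k_ge2 : 1 < k. Proof. by case: Hsp. Qed.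
Lemma mem_s v : (v \in s) = is_internal e v. Proof. by case: Hsp. Qed.
Lemma s_adj i : i.+1 < k -> e (nth x0 s i) (nth x0 s i.+1). Proof. by case: Hsp => _ _ _ H _; apply: H. Qed.
Lemma s_only x y : x \in s -> y \in s -> e x y ->
  (index y s == (index x s).+1) || (index x s == (index y s).+1).
Proof. by case: Hsp => _ _ _ _ H; apply: H. Qed.

Definition nb (v : V) : V := odflt v [pick w | e v w].

Lemma leaf_nb u : u \notin s -> e u (nb u) /\ forall w, e u w -> w = nb u.
Proof.
rewrite mem_s /is_internal negbK /is_leaf /degree => /cards1P [w Hw].
have Hin : forall z, e u z = (z == w).
  by move=> z; have := congr1 (fun X : {set V} => z \in X) Hw; rewrite !inE.
rewrite /nb; case: pickP => [z Hz | H]; last by have := H w; rewrite Hin eqxx.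
by rewrite /= Hz; split => // y; rewrite !Hin => /eqP -> ; move: Hz; rewrite Hin => /eqP.
Qed.

Lemma connect_closed (X : {set V}) a b : (forall y z, y \in X -> e y z -> z \in X) ->
  connect e a b -> a \in X -> b \in X.
Proof.
move=> HX /connectP [p Hp ->]; elim: p a Hp => //= z p IH a /andP[Haz Hp] Ha.
by apply: IH Hp (HX _ _ Ha Haz).
Qed.

Lemma nb_in u : u \notin s -> nb u \in s.
Proof.
move=> Hu; apply/negPn/negP => Hn.
have [Hu1 Hu2] := leaf_nb Hu; have [Hn1 Hn2] := leaf_nb Hn.
have Hnu : u = nb (nb u) by apply: Hn2; rewrite e_sym.
have Hs0 : nth x0 s 0 \in s by rewrite mem_nth // ltnW // k_ge2.
have : nth x0 s 0 \in [set u; nb u].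
  apply: (connect_closed _ (econn u _)); last by rewrite !inE eqxx.
  move=> y z; rewrite !inE => /orP[] /eqP -> Hz.
    by rewrite (Hu2 _ Hz) eqxx orbT.
  by rewrite Hnu -(Hn2 _ Hz) eqxx.
by rewrite !inE => /orP[] /eqP Heq; move: Hs0; rewrite Heq ?(negbTE Hu) ?(negbTE Hn).
Qed.


Definition anc v := if v \in s then v else nb v.
Definition pos v := index (anc v) s.

Lemma anc_in v : anc v \in s.
Proof. by rewrite /anc; case: ifPn => // /nb_in. Qed.

Lemma pos_lt v : pos v < k.
Proof. by rewrite /pos index_mem anc_in. Qed.

Lemma pos_s i : i < k -> pos (nth x0 s i) = i.
Proof. by move=> Hi; rewrite /pos /anc mem_nth // index_uniq // s_uniq. Qed.

Lemma pos_nb u : u \notin s -> pos u = pos (nb u).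
Proof. by move=> Hu; rewrite /pos /anc (negbTE Hu) nb_in. Qed.

Lemma anc_nth v : nth x0 s (pos v) = anc v.
Proof. by rewrite /pos nth_index // anc_in. Qed.

Lemma edge_cases x y : e x y ->
  [\/ exists2 i, i.+1 < k & [set x; y] = [set nth x0 s i; nth x0 s i.+1],
      (x \notin s /\ y = nb x) | (y \notin s /\ x = nb y)].
Proof.
move=> Hxy; case: (boolP (x \in s)) => Hx; last first.
  by apply: Or32; split => //; apply: (leaf_nb Hx).2.
case: (boolP (y \in s)) => Hy; last first.
  by apply: Or33; split => //; apply: (leaf_nb Hy).2; rewrite e_sym.
apply: Or31; case/orP: (s_only Hx Hy Hxy) => /eqP H.
  exists (index x s); first by rewrite -H index_mem.
  by rewrite -H !nth_index.
exists (index y s); first by rewrite -H index_mem.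
by rewrite -H !nth_index // set2C'.
Qed.

Lemma leaf_edgesP f : reflect (exists2 u, u \notin s & f = [set u; nb u]) (f \in leaf_edges e).
Proof.
apply: (iffP idP).
  rewrite inE => /andP[/imsetP [[x y]]]; rewrite inE /= => Hxy -> Hns.
  case: (edge_cases Hxy) => [[i Hi Heq] | [Hx ->] | [Hy ->]].
  - exfalso; move/negP: Hns; apply; rewrite Heq; apply/subsetP => z.
    rewrite !inE -mem_s => /orP[] /eqP ->; apply: mem_nth => //; exact: ltnW.
  - by exists x.
  - by exists y => //; rewrite set2C'.
case=> u Hu ->; rewrite inE; apply/andP; split.
  by apply/imsetP; exists (u, nb u) => //; rewrite inE /=; case: (leaf_nb Hu).
apply/negP => /subsetP /(_ u); rewrite !inE eqxx -mem_s => /(_ isT).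
by rewrite (negbTE Hu).
Qed.

Definition spE (i : nat) : {set V} := [set nth x0 s i; nth x0 s i.+1].

Definition Ac (c : seq bool) : {set {set V}} :=
  leaf_edges e :|: [set spE (val i) | i : 'I_k.-1 & ~~ nth false c i].


Lemma Ac_blk c x y : [set x; y] \in Ac c -> blk c (pos x) = blk c (pos y).
Proof.
rewrite inE => /orP[].
  case/leaf_edgesP => u Hu Heq.
  have H : forall z, z \in [set x; y] -> pos z = pos (nb u).
    move=> z; rewrite Heq !inE => /orP[] /eqP -> //; exact: pos_nb.
  by rewrite (H x (set21 _ _)) (H y (set22 _ _)).
case/imsetP => i; rewrite inE => Hc Heq.
have Hi : (val i).+1 < k by have := ltn_ord i; rewrite -ltnS prednK // (ltn_trans _ k_ge2).
have H : forall z, z \in [set x; y] -> blk c (pos z) = blk c (val i).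
  move=> z; rewrite Heq !inE => /orP[] /eqP ->; first by rewrite pos_s // ltnW.
  by rewrite pos_s // blkS (negbTE Hc) addn0.
by rewrite (H x (set21 _ _)) (H y (set22 _ _)).
Qed.

Lemma edge_rel_sym (A : {set {set V}}) : symmetric (edge_rel A).
Proof. by move=> x y; rewrite /edge_rel set2C'. Qed.

Lemma Ac_connect_blk c x y : connect (edge_rel (Ac c)) x y -> blk c (pos x) = blk c (pos y).
Proof.
case/connectP => p Hp ->; elim: p x Hp => //= z p IH x /andP[Hxz Hp].
by rewrite (Ac_blk Hxz) IH.
Qed.

Lemma leaf_sub_Ac c : leaf_edges e \subset Ac c.
Proof. by apply/subsetP => f Hf; rewrite inE Hf. Qed.

Lemma Ac_anc c v : connect (edge_rel (Ac c)) v (anc v).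
Proof.
rewrite /anc; case: ifPn => Hv; first exact: connect0.
apply: connect1; rewrite /edge_rel; apply: (subsetP (leaf_sub_Ac c)).
by apply/leaf_edgesP; exists v.
Qed.

Lemma Ac_spine c i j : i <= j -> j < k -> blk c j = blk c i ->
  connect (edge_rel (Ac c)) (nth x0 s i) (nth x0 s j).
Proof.
move=> Hij; elim: j Hij => [|j IH] Hij Hj Hb.
  by move: Hij; rewrite leqn0 => /eqP ->; exact: connect0.
case: (ltngtP i j.+1) Hij => // [Hlt | ->] _; last exact: connect0.
have Hbj : blk c j = blk c i.
  apply/eqP; rewrite eqn_leq -{1}Hb blk_mono ?leqnSn //= blk_mono //.
have Hcj : nth false c j = false.
  by move: Hb; rewrite blkS Hbj -{2}(addn0 (blk c i)) => /addnI; case: (nth false c j).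
apply: connect_trans (IH Hlt (ltnW Hj) Hbj) _.
apply: connect1; rewrite /edge_rel inE; apply/orP; right.
have Hjk : j < k.-1 by rewrite -ltnS prednK // (ltn_trans _ k_ge2).
by apply/imsetP; exists (Ordinal Hjk); first by rewrite inE Hcj.
Qed.

Definition Bset c j : {set V} := [set y | blk c (pos y) == j].

Lemma comp_Ac c v : component (Ac c) v = Bset c (blk c (pos v)).
Proof.
apply/setP => y; rewrite !inE; apply/idP/idP.
  by move/Ac_connect_blk => ->.
move/eqP => Hb.
have Hc : connect (edge_rel (Ac c)) (anc v) (anc y).
  rewrite -!anc_nth.
  wlog Hle : v y Hb / pos v <= pos y.
    move=> W; case: (leqP (pos v) (pos y)) => H; first exact: W.
    rewrite (sym_connect_sym (@edge_rel_sym _)).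
    by apply: W => //; exact: ltnW.
  exact: Ac_spine Hle (pos_lt y) Hb.
apply: connect_trans (Ac_anc c v) (connect_trans Hc _).
by rewrite (sym_connect_sym (@edge_rel_sym _)) Ac_anc.
Qed.


Lemma blk_surj_v c j : size c = k.-1 -> j <= count id c -> exists v, blk c (pos v) = j.
Proof.
move=> Hsz Hj; rewrite -blk_size in Hj; have [i Hi Hb] := blk_surj Hj.
exists (nth x0 s i); rewrite pos_s //.
by apply: leq_ltn_trans Hi _; rewrite Hsz prednK // (ltn_trans _ k_ge2).
Qed.

Lemma blk_le_count c v : size c = k.-1 -> blk c (pos v) < (count id c).+1.
Proof.
move=> Hsz; rewrite ltnS -blk_size blk_mono // Hsz -ltnS prednK ?pos_lt //.
exact: ltn_trans _ k_ge2.
Qed.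

Lemma xA_Ac (R : comNzRingType) (x : nat -> R) c : size c = k.-1 ->
  xA x (Ac c) = (\prod_(j < (count id c).+1) x #|Bset c j|)%R.
Proof.
move=> Hsz.
have Hcomp : components (Ac c) = [set Bset c (val j) | j in 'I_(count id c).+1].
  apply/setP => C; apply/imsetP/imsetP.
    case=> v _ ->; rewrite comp_Ac.
    by exists (Ordinal (blk_le_count v Hsz)).
  case=> j _ ->.
  have Hj : (j : nat) <= count id c := ltn_ord j.
  have [v Hv] := blk_surj_v Hsz Hj.
  by exists v => //; rewrite comp_Ac Hv.
rewrite /xA Hcomp big_imset /=.
  by apply: eq_bigl => j; rewrite inE.
move=> j1 j2 _ _ Heq; apply: val_inj.
have Hj : (j1 : nat) <= count id c := ltn_ord j1.
have [v Hv] := blk_surj_v Hsz Hj.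
have : v \in Bset c j1 by rewrite inE Hv.
by rewrite Heq inE Hv => /eqP.
Qed.


Lemma card_Bset c j : #|Bset c j| =
  (\sum_(i < k) (if blk c i == j then #|[set y | pos y == i]| else 0))%N.
Proof.
rewrite -sum1_card (partition_big (fun y => Ordinal (pos_lt y)) xpredT) //=.
apply: eq_bigr => i _; case: ifPn => Hb.
  rewrite -sum1_card; apply: eq_bigl => y; rewrite !inE -val_eqE /=.
  by case: (eqVneq (pos y) i) => [->|]; rewrite ?Hb ?andbF.
rewrite big_pred0 // => y; rewrite !inE -val_eqE /=.
by case: (eqVneq (pos y) i) => [->|]; rewrite ?(negbTE Hb) ?andbF.
Qed.

Lemma leaf_Ac : leaf_edges e = Ac (nseq k.-1 true).
Proof.
rewrite /Ac; set X := [set _ | _ in _].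
suff -> : X = set0 by rewrite setU0.
apply/setP => f; rewrite inE; apply/negbTE/negP => /imsetP [i].
by rewrite inE nth_nseq ltn_ord.
Qed.

Lemma comp_leaf i : i < k -> component (leaf_edges e) (nth x0 s i) = [set y | pos y == i].
Proof.
move=> Hi; rewrite leaf_Ac comp_Ac pos_s //; apply/setP => y; rewrite !inE.
have Hk : forall z, z < k -> z <= k.-1 by move=> z Hz; rewrite -ltnS prednK // (ltn_trans _ k_ge2).
by rewrite !blk_nseq ?Hk ?pos_lt.
Qed.

Lemma nth_spine_comp i : i < k -> nth 0 (spine_comp e s) i = #|[set y | pos y == i]|.
Proof. by move=> Hi; rewrite /spine_comp (nth_map x0) // comp_leaf. Qed.


Lemma kpred i : i < k.-1 -> i.+1 < k.
Proof. by move=> H; rewrite -ltnS prednK // in H; apply: ltn_trans k_ge2. Qed.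

Lemma spE_inj i j : i < k.-1 -> j < k.-1 -> spE i = spE j -> i = j.
Proof.
move=> Hi Hj Heq.
have Hi1 := kpred Hi; have Hj1 := kpred Hj.
have Hi0 := ltnW Hi1; have Hj0 := ltnW Hj1.
have U := s_uniq.
have : nth x0 s i \in spE j by rewrite -Heq set21.
rewrite !inE !nth_uniq // => /orP[/eqP //| /eqP Hij]; subst i.
have : nth x0 s j.+2 \in spE j by rewrite -Heq set22.
have Hj2 : j.+2 < k := kpred Hi.
by rewrite !inE !nth_uniq // => /orP[] /eqP; lia.
Qed.

Lemma spE_notleaf i : i < k.-1 -> spE i \notin leaf_edges e.
Proof.
move=> Hi; apply/negP => /leaf_edgesP [u Hu Heq].
have : u \in spE i by rewrite Heq set21.
rewrite !inE => /orP[] /eqP Hu'; move: Hu; rewrite Hu' mem_nth //.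
  exact: ltnW (kpred Hi).
exact: kpred Hi.
Qed.

Lemma spE_in_Ac c i : i < k.-1 -> (spE i \in Ac c) = ~~ nth false c i.
Proof.
move=> Hi; rewrite /Ac inE (negbTE (spE_notleaf Hi)) /=.
apply/imsetP/idP.
  by case=> j; rewrite inE => Hc /spE_inj -> //.
by move=> Hc; exists (Ordinal Hi); rewrite // inE.
Qed.

Lemma Ac_inj c1 c2 : size c1 = k.-1 -> size c2 = k.-1 -> Ac c1 = Ac c2 -> c1 = c2.
Proof.
move=> H1 H2 Heq; apply: (@eq_from_nth _ false); first by rewrite H1 H2.
move=> i; rewrite H1 => Hi.
by apply: negb_inj; rewrite -!spE_in_Ac // Heq.
Qed.

Lemma spE_edge i : i < k.-1 -> spE i \in edges e.
Proof.
move=> Hi; apply/imsetP; exists (nth x0 s i, nth x0 s i.+1) => //.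
by rewrite inE /= s_adj // kpred.
Qed.

Lemma Ac_char (A : {set {set V}}) : (A \subset edges e) && (leaf_edges e \subset A) =
  (A \in [set Ac (val t) | t : k.-1.-tuple bool]).
Proof.
apply/idP/imsetP.
  case/andP => HAe HLA.
  set c := mkseq (fun i => spE i \notin A) k.-1.
  have Hc : size c == k.-1 by rewrite size_mkseq.
  exists (Tuple Hc) => //=; apply/setP => f; apply/idP/idP => Hf.
    have := subsetP HAe _ Hf; case/imsetP => [[x y]]; rewrite inE /= => Hxy Hfe.
    case: (edge_cases Hxy) => [[i Hi Heq] | [Hx Hy] | [Hy Hx]].
    - have Hi' : i < k.-1 by rewrite -ltnS prednK // (ltn_trans _ k_ge2).
      have Hfi : f = spE i by rewrite Hfe Heq.
      by rewrite Hfi spE_in_Ac // nth_mkseq // negbK -Hfi.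
    - by apply: (subsetP (leaf_sub_Ac c)); apply/leaf_edgesP; exists x; rewrite // Hfe Hy.
    - by apply: (subsetP (leaf_sub_Ac c)); apply/leaf_edgesP; exists y; rewrite // Hfe Hx set2C'.
  move: Hf; rewrite /Ac inE => /orP[]; first exact: (subsetP HLA).
  case/imsetP => i; rewrite inE nth_mkseq // negbK => Hi ->; exact: Hi.
case=> t _ ->; apply/andP; split; last exact: leaf_sub_Ac.
apply/subsetP => f; rewrite /Ac inE => /orP[]; first by rewrite inE => /andP[].
by case/imsetP => i _ ->; apply: spE_edge; exact: ltn_ord.
Qed.


Lemma UL_Ac (R : comNzRingType) (x : nat -> R) :
  UL e x = (\sum_(c <- allbits k.-1) xA x (Ac c))%R.
Proof.
rewrite /UL (eq_bigl (fun A => A \in [set Ac (val t) | t : k.-1.-tuple bool])); last first.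
  by move=> A; rewrite Ac_char.
rewrite big_imset /=; last first.
  by move=> t1 t2 _ _ /Ac_inj; rewrite !size_tuple => H; apply: val_inj; apply: H.
by rewrite -sum_tuples.
Qed.

Definition blocksum' (c : seq bool) (f : nat -> nat) k j :=
  (\sum_(i < k) (if blk c i == j then f i else 0))%N.

Lemma UL_blocks (R : comNzRingType) (x : nat -> R) :
  UL e x = (\sum_(c <- allbits k.-1)
     \prod_(j <- iota 0 (count id c).+1) x (blocksum' c (nth 0 (spine_comp e s)) k j))%R.
Proof.
rewrite UL_Ac; apply: eq_big_seq => c; rewrite mem_allbits => /eqP Hc.
rewrite xA_Ac // -(big_mkord (fun _ => true) (fun j => x #|Bset c j|)) /index_iota subn0; apply: eq_bigr => j _.
rewrite card_Bset /blocksum'; congr (x _); apply: eq_bigr => i _.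
by rewrite nth_spine_comp.
Qed.

Lemma spine_comp_pos : all (fun b => 0 < b) (spine_comp e s).
Proof.
apply/allP => b /mapP [v _ ->]; apply/card_gt0P; exists v.
by rewrite inE connect0.
Qed.

End Graph.

Lemma spine_rev (V : finType) (e : rel V) s : symmetric e -> is_spine e s -> is_spine e (rev s).
Proof.
move=> Hsym [U Hk Hm Ha Ho]; split.
- by rewrite rev_uniq.
- by rewrite size_rev.
- by move=> v; rewrite mem_rev.
- move=> x0 i; rewrite size_rev => Hi.
  rewrite (nth_rev _ (ltnW Hi)) (nth_rev _ Hi) Hsym.
  have -> : size s - i.+1 = (size s - i.+2).+1 by lia.
  by apply: Ha; lia.
move=> x y; rewrite !mem_rev => Hx Hy Hxy.
rewrite !index_rev //.
have := Ho _ _ Hx Hy Hxy.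
have := index_mem x s; have := index_mem y s; rewrite Hx Hy.
by lia.
Qed.

Unset Implicit Arguments.

Theorem proposition2p3 (V : finType) (e : rel V) :
  simple_graph e -> is_tree e -> proper_caterpillar e ->
  forall beta : seq nat, Phi e beta ->
  forall (R : comNzRingType) (x : nat -> R),
    UL e x = Lpoly x beta.
Proof.
move=> [Hsym _] [Hconn _] _ beta [s Hs Hb] R x.
wlog -> : s Hs Hb / beta = spine_comp e s.
  move=> W; case: Hb => Hb; first exact: (W s Hs (or_introl Hb) Hb).
  have Hb' : beta = spine_comp e (rev s) by rewrite /spine_comp map_rev.
  exact: (W (rev s) (spine_rev Hsym Hs) (or_introl Hb') Hb').
have Hk : 1 < size s by case: Hs.
have [v _] : exists v : V, true by case: (s) Hk => [|v ?] //; exists v.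
have Hpos : all (fun b => 0 < b) (spine_comp e s) by apply: spine_comp_pos.
have Hsz : size (spine_comp e s) = size s by rewrite size_map.
case E : (spine_comp e s) Hpos Hsz => [|a bs] Hpos Hsz; first by rewrite -Hsz in Hk.
move: Hpos => /= /andP[Ha Hbs].
rewrite (UL_blocks Hsym Hconn Hs v x) (Lpoly_Cs x Ha Hbs) E -Hsz /=.
apply: eq_big_seq => c; rewrite mem_allbits => /eqP Hc.
by rewrite (coarsA_blocks a Hc) big_map.
Qed.
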